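(* Let $R$ be a finite ring with identity, $\alpha\in(0,1)$, $Q$ a probability distribution on $R$ constant on similarity classes, and $(X_t)$ the Markov chain defined below. Then for every fixed $\epsilon<1/2$ (with $\epsilon>0$), the mixing time satisfies \[t_{\mathrm{mix}}(\epsilon)\le\frac{\log\epsilon}{\log(1-\alpha)}+1.\]
   Context: $a,b$ are similar if $b=uau^{-1}$ for some unit $u$ of $R$. The Markov chain $(X_t)$ on $R$: at each step an independent coin with Heads probability $\alpha$ is tossed; on Heads, $X_{t+1}=X_t+Y$ with $Y$ uniform on $R$; on Tails, $X_{t+1}=Z\cdot X_t$ with $Z$ drawn from $Q$ (all independent). Let $M_R$ be its transition matrix and $\pi$ its stationary distribution. The total variation distance is $\|\mu-\nu\|_{TV}=\frac12\sum_{x}|\mu(x)-\nu(x)|$, $d(t)=\max_{x\in R}\|M_R^t(x,\cdot)-\pi\|_{TV}$, and $t_{\mathrm{mix}}(\epsilon)=\min\{t\mid d(t)\le\epsilon\}$. *)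

(* Defs.v *)
From HB Require Import structures.
From mathcomp Require Import all_boot all_order all_algebra.
From mathcomp Require Import all_classical all_reals all_analysis.
Set Implicit Arguments. Unset Strict Implicit. Unset Printing Implicit Defensive.
Import Order.TTheory GRing.Theory Num.Theory.
Local Open Scope ring_scope.

Section Chain.
Variables (K : realType) (R : finPzRingType).

Definition is_unit (u : R) : Prop := exists v : R, u * v = 1 /\ v * u = 1.

Definition ring_similar (a b : R) : Prop :=
  exists u v : R, u * v = 1 /\ v * u = 1 /\ b = u * a * v.

Definition is_distr (P : R -> K) : Prop :=
  (forall x, 0 <= P x) /\ \sum_(x : R) P x = 1.

(* transition matrix: with prob alpha add a uniform Y, else multiply on the
   left by Z ~ Q *)
Definition MR (alpha : K) (Q : R -> K) (x y : R) : K :=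
  alpha / #|R|%:R + (1 - alpha) * \sum_(z : R | z * x == y) Q z.

Fixpoint MRpow (alpha : K) (Q : R -> K) (t : nat) (x y : R) : K :=
  match t with
  | 0 => (x == y)%:R
  | t'.+1 => \sum_(w : R) MRpow alpha Q t' x w * MR alpha Q w y
  end.

Definition is_stationary (alpha : K) (Q : R -> K) (pi : R -> K) : Prop :=
  is_distr pi /\ forall y, \sum_(x : R) pi x * MR alpha Q x y = pi y.

Definition tv_dist (mu nu : R -> K) : K :=
  2^-1 * \sum_(x : R) `|mu x - nu x|.

Definition dist_t (alpha : K) (Q : R -> K) (pi : R -> K) (t : nat) : K :=
  \big[Num.max/0]_(x : R) tv_dist (MRpow alpha Q t x) pi.

Definition is_tmix (alpha : K) (Q : R -> K) (pi : R -> K) (eps : K) (t : nat)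
  : Prop :=
  dist_t alpha Q pi t <= eps /\
  forall s : nat, dist_t alpha Q pi s <= eps -> (t <= s)%N.

End Chain.

(* Main.v *)
Require Import Defs.
From HB Require Import structures.
From mathcomp Require Import all_boot all_order all_algebra.
From mathcomp Require Import all_classical all_reals all_analysis.
From mathcomp Require Import lra.
Import Order.TTheory GRing.Theory Num.Theory.
Local Open Scope ring_scope.

Lemma P_sum (K : realType) (R : finPzRingType) (Q : R -> K) :
  \sum_(x : R) Q x = 1 -> forall w : R, \sum_(y : R) \sum_(z : R | z * w == y) Q z = 1.
Proof.
move=> hQ w; rewrite -[RHS]hQ.
rewrite [RHS](partition_big (fun z : R => z * w) predT) //.
Qed.

Lemma P_ge0 (K : realType) (R : finPzRingType) (Q : R -> K) :
  (forall x, 0 <= Q x) -> forall w y : R, 0 <= \sum_(z : R | z * w == y) Q z.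
Proof. by move=> hQ w y; apply: sumr_ge0 => z _. Qed.

Lemma card_neq0 (K : realType) (R : finPzRingType) : (#|R|%:R : K) != 0.
Proof.
rewrite pnatr_eq0 -lt0n; apply/card_gt0P; by exists 0.
Qed.

Lemma MR_row (K : realType) (R : finPzRingType) (alpha : K) (Q : R -> K) :
  \sum_(x : R) Q x = 1 -> forall w : R, \sum_(y : R) MR alpha Q w y = 1.
Proof.
move=> hQ w; rewrite /MR big_split /= -[X in _ + X]big_distrr /= P_sum // mulr1.
rewrite sumr_const -[X in X + _]mulr_natr -mulrA mulVf ?card_neq0 ?mulr1 //.
by rewrite addrC subrK.
Qed.

Theorem theorem4p1 (K : realType) (R : finPzRingType) (alpha : K)
  (Q : R -> K) (pi : R -> K) (eps : K) :
  0 < alpha < 1 ->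
  is_distr Q ->
  (forall a b : R, ring_similar a b -> Q a = Q b) ->
  is_stationary alpha Q pi ->
  0 < eps < 2^-1 ->
  exists t : nat, is_tmix alpha Q pi eps t /\
    t%:R <= ln eps / ln (1 - alpha) + 1.
Proof.
move=> /andP[a0 a1] [Q0 Q1] _ [[pi0 pi1] pist] /andP[e0 e1].
set P := fun w y => \sum_(z : R | z * w == y) Q z.
have Psum : forall w, \sum_y P w y = 1 by exact: P_sum.
have Pge0 : forall w y, 0 <= P w y by exact: P_ge0.
have Mrow := @MR_row K R alpha Q Q1.
have key : forall x t, \sum_y `|MRpow alpha Q t x y - pi y| <= 2 * (1 - alpha) ^+ t.
  move=> x.
  have Drec : forall t y, MRpow alpha Q t.+1 x y - pi y =
      \sum_w (MRpow alpha Q t x w - pi w) * MR alpha Q w y.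
    move=> t y; rewrite /= -(pist y) -sumrB; apply: eq_bigr => w _.
    by rewrite mulrBl.
  have Dsum : forall t, \sum_y (MRpow alpha Q t x y - pi y) = 0.
    elim=> [|t IH].
      rewrite sumrB pi1 /= (bigD1 x) //= eqxx big1 ?addr0 ?subrr //.
      by move=> y /negbTE; rewrite eq_sym => ->.
    under eq_bigr => y _ do rewrite Drec.
    rewrite exchange_big /=.
    under eq_bigr => w _ do rewrite -mulr_sumr Mrow mulr1.
    exact: IH.
  elim=> [|t IH].
    rewrite expr0 mulr1.
    apply: le_trans; first by apply: ler_sum => y _; exact: ler_normB.
    rewrite big_split /=.
    have -> : \sum_y `|pi y| = 1 by rewrite -pi1; apply: eq_bigr => y _; rewrite ger0_norm.
    have -> : \sum_(y : R) `|((x == y)%:R : K)| = 1.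
      rewrite (bigD1 x) //= eqxx normr1 big1 ?addr0 //.
      by move=> y /negbTE; rewrite eq_sym => ->; rewrite normr0.
    by [].
  have step : forall y, MRpow alpha Q t.+1 x y - pi y =
      (1 - alpha) * \sum_w (MRpow alpha Q t x w - pi w) * P w y.
    move=> y; rewrite Drec /MR.
    under eq_bigr => w _ do rewrite mulrDr.
    rewrite big_split /= -mulr_suml Dsum mul0r add0r mulr_sumr.
    by apply: eq_bigr => w _; rewrite mulrCA.
  under eq_bigr => y _ do rewrite step normrM (ger0_norm (_ : 0 <= 1 - alpha)) ?subr_ge0 ?ltW //.
  rewrite -mulr_sumr exprS mulrCA; apply: ler_wpM2l; first by rewrite subr_ge0 ltW.
  apply: le_trans IH.
  apply: le_trans; first by apply: ler_sum => y _; exact: ler_norm_sum.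
  rewrite exchange_big /=; apply: ler_sum => w _.
  under eq_bigr => y _ do rewrite normrM (ger0_norm (Pge0 w y)).
  by rewrite -mulr_sumr Psum mulr1.
have dist_le : forall t, dist_t alpha Q pi t <= (1 - alpha) ^+ t.
  move=> t; rewrite /dist_t; apply: bigmax_le => [|x _].
    by rewrite exprn_ge0 // subr_ge0 ltW.
  rewrite /tv_dist; apply: le_trans (ler_wpM2l _ (key x t)) _.
    by rewrite invr_ge0.
  by rewrite mulrA mulVf ?mul1r.
set l := ln (1 - alpha).
have l0 : l < 0 by rewrite /l ln_lt0 //; apply/andP; split; lra.
have le0 : ln eps < 0 by rewrite ln_lt0 //; apply/andP; split; lra.
set T := ln eps / l.
have T0 : 0 <= T by rewrite /T; apply: mulr_le0; rewrite ?invr_le0 ltW.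
have [Tlo Thi] := andP (truncn_itv T0).
set n := (Num.Def.trunc T).+1.
have Pn : dist_t alpha Q pi n <= eps.
  apply: le_trans (dist_le n) _.
  have h1 : 0 < 1 - alpha by rewrite subr_gt0.
  rewrite -ler_ln ?posrE ?exprn_gt0 // lnXn // -mulr_natl -/l.
  have -> : ln eps = T * l by rewrite /T divfK // lt_eqF.
  rewrite -/n in Thi; nra.
have exP : exists s, (fun s => dist_t alpha Q pi s <= eps) s by exists n.
case: (ex_minnP exP) => m Pm minm.
exists m; split; first by split.
apply: le_trans (_ : n%:R <= _).
  by rewrite ler_nat; apply: minm.
by rewrite /n -natr1 lerD2r.
Qed.
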